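(* Let $k$ be a field, $R=k[x,y]$, $I=(x^d,y^d,x^by^{d-b})$ with $d\ge2$, $1\le b\le d-1$, $\gcd(d,b)=1$, and $J=(x^d,y^d)$. Then for every $\ell\ge1$ there exist nonnegative integers $s_\ell,t_\ell$ with $$JI^{\ell-1}:I^\ell=(x^{s_\ell},y^{t_\ell}).$$ *)

(* Defs.v *)
(* k[x,y] is modelled as {poly {poly k}}:
   x is the inner variable ('X)%:P, y is the outer variable 'X. *)
From HB Require Import structures.
From mathcomp Require Import all_boot all_order all_algebra.
Set Implicit Arguments. Unset Strict Implicit. Unset Printing Implicit Defensive.
Import GRing.Theory.
Local Open Scope ring_scope.

Definition bipoly (k : fieldType) := {poly {poly k}}.

Definition varx (k : fieldType) : bipoly k := ('X : {poly k})%:P.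
Definition vary (k : fieldType) : bipoly k := 'X.

Definition idl (k : fieldType) := bipoly k -> Prop.

Definition ideal_gen (k : fieldType) (s : seq (bipoly k)) : idl k :=
  fun f => exists c : 'I_(size s) -> bipoly k,
    f = \sum_(i < size s) c i * s`_i.

Definition ideal_unit (k : fieldType) : idl k := fun _ => True.

Definition ideal_mul (k : fieldType) (A B : idl k) : idl k :=
  fun f => exists (n : nat) (a b : 'I_n -> bipoly k),
    (forall i, A (a i) /\ B (b i)) /\ f = \sum_(i < n) a i * b i.

Fixpoint ideal_exp (k : fieldType) (A : idl k) (n : nat) : idl k :=
  match n with
  | 0 => @ideal_unit k
  | m.+1 => @ideal_mul k A (ideal_exp A m)
  end.

Definition ideal_colon (k : fieldType) (A B : idl k) : idl k :=
  fun f => forall g, B g -> A (f * g).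

Definition ideal_eq (k : fieldType) (A B : idl k) : Prop :=
  forall f, A f <-> B f.

(* Main.v *)
Require Import Defs.
From HB Require Import structures.
From mathcomp Require Import all_boot all_order all_algebra.
From mathcomp Require Import zify.
From Stdlib Require Import Classical.
Import GRing.Theory.
Local Open Scope ring_scope.
Set Implicit Arguments. Unset Strict Implicit.

Section Aux.
Variable k : fieldType.
Implicit Types f g : bipoly k.

Definition cf f (i j : nat) : k := (f`_j)`_i.
Definition mon (i j : nat) : bipoly k := varx k ^+ i * vary k ^+ j.
Definition supp_in (S : nat -> nat -> Prop) f := forall i j, cf f i j != 0 -> S i j.

Lemma monE i j : mon i j = ('X^i)%:P * 'X^j.
Proof. by rewrite /mon /varx /vary polyC_exp. Qed.

Lemma cf_mon i j i' j' : cf (mon i j) i' j' = ((i' == i) && (j' == j))%:R.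
Proof.
rewrite /cf monE coefCM coefXn; case: (j' == j); last by rewrite mulr0 coef0 andbF.
by rewrite mulr1 coefXn andbT.
Qed.

Lemma cf_shift f a c i j : cf (f * mon a c) (i + a) (j + c) = cf f i j.
Proof.
rewrite /cf monE mulrA coefMXn ltnNge leq_addl /= addnK coefMC coefMXn.
by rewrite ltnNge leq_addl /= addnK.
Qed.

Lemma supp0 S : supp_in S 0.
Proof. by move=> i j; rewrite /cf !coef0 eqxx. Qed.

Lemma suppD S f g : supp_in S f -> supp_in S g -> supp_in S (f + g).
Proof.
move=> hf hg i j; rewrite /cf !coefD.
case: (eqVneq ((f`_j)`_i) 0) => [->|/hf //]; rewrite add0r; exact: hg.
Qed.

Lemma supp_sum S n (F : 'I_n -> bipoly k) :
  (forall i, supp_in S (F i)) -> supp_in S (\sum_(i < n) F i).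
Proof.
move=> h; elim/big_ind: _ => //; [exact: supp0 | exact: suppD].
Qed.

Lemma suppM (S1 S2 S3 : nat -> nat -> Prop) f g :
  supp_in S1 f -> supp_in S2 g ->
  (forall i1 j1 i2 j2, S1 i1 j1 -> S2 i2 j2 -> S3 (i1 + i2)%N (j1 + j2)%N) ->
  supp_in S3 (f * g).
Proof.
move=> hf hg h i j nz; apply: NNPP => nS; move/eqP: nz; apply.
rewrite /cf coefM coef_sum; apply: big1 => [[j1 /= hj1]] _.
rewrite coefM; apply: big1 => [[i1 /= hi1]] _.
case: (eqVneq ((f`_j1)`_i1) 0) => [->|/hf f1]; first by rewrite mul0r.
case: (eqVneq ((g`_(j - j1))`_(i - i1)) 0) => [->|/hg g1]; first by rewrite mulr0.
exfalso; apply: nS; have := h _ _ _ _ f1 g1.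
by rewrite !subnKC // -ltnS.
Qed.

Lemma supp_mon (S : nat -> nat -> Prop) i j : S i j -> supp_in S (mon i j).
Proof.
move=> hS i' j'; rewrite cf_mon.
case: (eqVneq i' i) => [->|_]; last by rewrite /= eqxx.
by case: (eqVneq j' j) => [->|_] //=; rewrite eqxx.
Qed.

Lemma suppT f : supp_in (fun _ _ => True) f.
Proof. by []. Qed.

Lemma decomp f : f = \sum_(j < size f) \sum_(i < size f`_j) (cf f i j)%:P%:P * mon i j.
Proof.
rewrite -{1}[f]coefK poly_def; apply: eq_bigr => j _.
rewrite -{1}[f`_j]coefK poly_def -mul_polyC rmorph_sum /= mulr_suml.
apply: eq_bigr => i _; rewrite monE -mul_polyC rmorphM /= mulrA.
by rewrite /cf.
Qed.

Lemma supp_ideal (P : bipoly k -> Prop) (S : nat -> nat -> Prop) :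
  P 0 -> (forall x y, P x -> P y -> P (x + y)) ->
  (forall c i j, S i j -> P (c%:P%:P * mon i j)) ->
  forall f, supp_in S f -> P f.
Proof.
move=> P0 PD Pm f hf; rewrite (decomp f).
elim/big_ind: _ => // j _; elim/big_ind: _ => // i _.
case: (eqVneq (cf f i j) 0) => [->|/hf]; last exact: Pm.
by rewrite !mul0r.
Qed.

End Aux.
Arguments supp_in {k}.
Arguments cf {k}.
Arguments decomp {k}.

Section Aux2.
Variable k : fieldType.
Implicit Types f g : bipoly k.

Lemma monD i j i' j' : mon k i j * mon k i' j' = mon k (i + i') (j + j').
Proof. by rewrite /mon !exprD mulrACA. Qed.

Lemma gen_supp (S : nat -> nat -> Prop) (s : seq (bipoly k)) f :
  (forall i j i' j', S i j -> (i <= i')%N -> (j <= j')%N -> S i' j') ->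
  (forall n, supp_in S s`_n) -> ideal_gen s f -> supp_in S f.
Proof.
move=> up hs [c ->]; apply: supp_sum => i.
apply: (suppM (@suppT _ (c i)) (hs i)) => i1 j1 i2 j2 _ h.
by apply: (up _ _ _ _ h); rewrite leq_addl.
Qed.

Lemma mul_supp (S1 S2 S3 : nat -> nat -> Prop) (A B : idl k) f :
  (forall x, A x -> supp_in S1 x) -> (forall x, B x -> supp_in S2 x) ->
  (forall i1 j1 i2 j2, S1 i1 j1 -> S2 i2 j2 -> S3 (i1 + i2)%N (j1 + j2)%N) ->
  ideal_mul A B f -> supp_in S3 f.
Proof.
move=> hA hB h [n [a [c [hac ->]]]]; apply: supp_sum => i.
have [ha hc] := hac i; exact: suppM (hA _ ha) (hB _ hc) h.
Qed.

Lemma gen_mem (s : seq (bipoly k)) n c : (n < size s)%N -> ideal_gen s (c * s`_n).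
Proof.
move=> hn; exists (fun i => if val i == n then c else 0).
rewrite (bigD1 (Ordinal hn)) //= eqxx big1 ?addr0 // => i ne.
have -> : (val i == n) = false.
  by apply/negbTE; move: ne; apply: contra => /eqP h; apply/eqP/val_inj.
by rewrite mul0r.
Qed.

Lemma gen0 (s : seq (bipoly k)) : ideal_gen s 0.
Proof. by exists (fun _ => 0); rewrite big1 // => i _; rewrite mul0r. Qed.

Lemma genD (s : seq (bipoly k)) x y : ideal_gen s x -> ideal_gen s y -> ideal_gen s (x + y).
Proof.
move=> [c1 ->] [c2 ->]; exists (fun i => c1 i + c2 i).
by rewrite -big_split /=; apply: eq_bigr => i _; rewrite mulrDl.
Qed.

Lemma genM (s : seq (bipoly k)) c x : ideal_gen s x -> ideal_gen s (c * x).
Proof.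
move=> [c1 ->]; exists (fun i => c * c1 i).
by rewrite mulr_sumr; apply: eq_bigr => i _; rewrite mulrA.
Qed.

Lemma mul0 (A B : idl k) : ideal_mul A B 0.
Proof.
exists 0%N, (fun _ => 0), (fun _ => 0); split; first by case.
by rewrite big_ord0.
Qed.

Lemma mulD (A B : idl k) x y : ideal_mul A B x -> ideal_mul A B y -> ideal_mul A B (x + y).
Proof.
move=> [n1 [a1 [c1 [h1 ->]]]] [n2 [a2 [c2 [h2 ->]]]].
exists (n1 + n2)%N.
exists (fun i => match split i with inl u => a1 u | inr v => a2 v end).
exists (fun i => match split i with inl u => c1 u | inr v => c2 v end).
split.
  by move=> i; case: (split i) => u.
rewrite big_split_ord /=; congr (_ + _); apply: eq_bigr => i _.
  by rewrite (unsplitK (inl i)).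
by rewrite (unsplitK (inr i)).
Qed.

Lemma mul1 (A B : idl k) x y : A x -> B y -> ideal_mul A B (x * y).
Proof.
move=> hx hy; exists 1%N, (fun _ => x), (fun _ => y); split => //.
by rewrite big_ord1.
Qed.

Lemma sum_mem (P : idl k) n (F : 'I_n -> bipoly k) :
  P 0 -> (forall x y, P x -> P y -> P (x + y)) -> (forall i, P (F i)) ->
  P (\sum_(i < n) F i).
Proof. by move=> P0 PD h; elim/big_ind: _. Qed.

End Aux2.

Section Aux3.
Variable k : fieldType.
Variables d b e : nat.

Definition gI : seq (bipoly k) := [:: mon k d 0; mon k 0 d; mon k b e].
Definition gJ : seq (bipoly k) := [:: mon k d 0; mon k 0 d].

Definition SI m i j := exists p q r, (p + q + r = m)%N /\ (d * p + b * r <= i)%N /\ (d * q + e * r <= j)%N.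
Definition SJ i j := (d <= i)%N \/ (d <= j)%N.

Lemma gen_mem1 (s : seq (bipoly k)) n : (n < size s)%N -> ideal_gen s s`_n.
Proof. by move=> h; rewrite -[s`_n]mul1r; exact: gen_mem. Qed.

Lemma I_supp f : ideal_gen gI f -> supp_in (SI 1) f.
Proof.
apply: gen_supp.
  move=> i j i' j' [p [q [r [h1 [h2 h3]]]]] hi hj; exists p, q, r; split => //; lia.
case=> [|[|[|n]]] /=; try apply: supp_mon.
- by exists 1%N, 0%N, 0%N; rewrite !muln0 muln1; lia.
- by exists 0%N, 1%N, 0%N; rewrite !muln0 muln1; lia.
- by exists 0%N, 0%N, 1%N; rewrite !muln0 !muln1; lia.
- by rewrite nth_nil; exact: supp0.
Qed.

Lemma J_supp f : ideal_gen gJ f -> supp_in SJ f.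
Proof.
apply: gen_supp.
  move=> i j i' j' [h|h] hi hj; [left|right]; lia.
case=> [|[|n]] /=; try apply: supp_mon.
- by left.
- by right.
- by rewrite nth_nil; exact: supp0.
Qed.

Lemma SI_add m i1 j1 i2 j2 : SI 1 i1 j1 -> SI m i2 j2 -> SI m.+1 (i1 + i2) (j1 + j2).
Proof.
move=> [p1 [q1 [r1 [h1 [h2 h3]]]]] [p2 [q2 [r2 [g1 [g2 g3]]]]].
exists (p1 + p2)%N, (q1 + q2)%N, (r1 + r2)%N; rewrite !mulnDr; split; lia.
Qed.

Lemma Iexp_supp m f : ideal_exp (ideal_gen gI) m f -> supp_in (SI m) f.
Proof.
elim: m f => [|m IH] f /=.
  by move=> _ i j _; exists 0%N, 0%N, 0%N; rewrite !muln0.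
apply: mul_supp; [exact: I_supp | exact: IH | exact: SI_add].
Qed.

Lemma mono_Iexp m p q r : (p + q + r = m)%N ->
  ideal_exp (ideal_gen gI) m (mon k (d * p + b * r) (d * q + e * r)).
Proof.
elim: m p q r => [|m IH] p q r h //=.
case: p h => [|p] h.
  case: q h => [|q] h.
    case: r h => [|r] h //; rewrite addnS in h; case: h => h.
    have -> : mon k (d * 0 + b * r.+1) (d * 0 + e * r.+1)
      = mon k b e * mon k (d * 0 + b * r) (d * 0 + e * r).
      by rewrite monD; congr mon; rewrite !mulnS; lia.
    by apply: mul1; [exact: (@gen_mem1 gI 2) | exact: IH].
  rewrite addnS addSn in h; case: h => h.
  have -> : mon k (d * 0 + b * r) (d * q.+1 + e * r)
      = mon k 0 d * mon k (d * 0 + b * r) (d * q + e * r).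
    by rewrite monD; congr mon; rewrite !mulnS; lia.
  by apply: mul1; [exact: (@gen_mem1 gI 1) | exact: IH].
rewrite !addSn in h; case: h => h.
have -> : mon k (d * p.+1 + b * r) (d * q + e * r)
    = mon k d 0 * mon k (d * p + b * r) (d * q + e * r).
  by rewrite monD; congr mon; rewrite !mulnS; lia.
by apply: mul1; [exact: (@gen_mem1 gI 0) | exact: IH].
Qed.

End Aux3.

Section Arith.
Variables d b e l : nat.

Definition SA i j := exists p q r, (p + q + r = l)%N /\ (0 < p + q)%N /\
   (d * p + b * r <= i)%N /\ (d * q + e * r <= j)%N.
Definition PP u := exists n p, (0 < n <= l)%N /\ (p <= n)%N /\ (b * n <= d * p)%N /\ (d * p - b * n <= u)%N.
Definition QQ v := exists n p, (0 < n <= l)%N /\ (p <= n)%N /\ (d * p <= b * n)%N /\ (b * n - d * p <= v)%N.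

Lemma SA_PQ (hde : d = (b + e)%N) i j : SA (i + b * l) (j + e * l) -> PP i \/ QQ j.
Proof.
rewrite /SA /PP /QQ hde => -[p [q [r [hl [hpq [h1 h2]]]]]]; subst l.
move: h1 h2; rewrite !mulnDr !mulnDl => h1 h2.
case: (leqP (b * (p + q)) ((b + e) * p)) => hc.
  left; exists (p + q)%N, p; move: hc; rewrite !mulnDr !mulnDl => hc; split; lia.
right; exists (p + q)%N, p; move: hc; rewrite !mulnDr !mulnDl => hc; split; lia.
Qed.

Lemma comb (hde : d = (b + e)%N) s t : PP s -> QQ t ->
  forall i1 j1 i2 j2, ((s <= i1)%N \/ (t <= j1)%N) -> SI d b e l i2 j2 ->
  SA (i1 + i2) (j1 + j2).
Proof.
move=> hP hQ i1 j1 i2 j2 hst [p' [q' [r' [hl [h1 h2]]]]].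
case: (posnP (p' + q')) => hpq; last first.
  by exists p', q', r'; split => //; split => //; split; lia.
have p0 : p' = 0%N by lia. have q0 : q' = 0%N by lia. subst p' q'.
rewrite !add0n in hl; subst r'.
have gen : forall n p, (0 < n <= l)%N -> (p <= n)%N ->
   (d * p + b * (l - n) <= i1 + i2)%N -> (d * (n - p) + e * (l - n) <= j1 + j2)%N ->
   SA (i1 + i2) (j1 + j2).
  move=> n p hn hp g1 g2; exists p, (n - p)%N, (l - n)%N; split; first lia.
  by split; [lia | split].
rewrite /PP /QQ hde in gen hP hQ h1 h2.
have fin : forall n p, (0 < n <= l)%N -> (p <= n)%N ->
  ((b * n <= (b + e) * p)%N /\ ((b + e) * p - b * n <= i1)%N) \/
  (((b + e) * p <= b * n)%N /\ (b * n - (b + e) * p <= j1)%N) ->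
  SA (i1 + i2) (j1 + j2).
  move=> n p /andP[hn0 hnl] hp hc.
  have [q0 En] : exists q0, n = (p + q0)%N by exists (n - p)%N; lia.
  have [r0 El] : exists r0, l = (n + r0)%N by exists (l - n)%N; lia.
  apply: (gen n p); [by rewrite hn0 hnl | done | | ];
  rewrite El addKn ?En ?addKn; move: h1 h2 hc; rewrite El ?En !mulnDr !mulnDl => *; lia.
case: hst => hst.
  case: hP => n [p [hn [hp [g1 g2]]]]; apply: (fin n p) => //; left; split => //; lia.
case: hQ => n [p [hn [hp [g1 g2]]]]; apply: (fin n p) => //; right; split => //; lia.
Qed.

End Arith.

Lemma min_ex (P : nat -> Prop) n : P n -> exists s, P s /\ forall u, P u -> (s <= u)%N.
Proof.
elim: n {-2}n (leqnn n) => [|N IH] n hn hP.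
  by exists n; split => // u _; move: hn; rewrite leqn0 => /eqP ->.
case: (classic (exists m, (m < n)%N /\ P m)) => [[m [hm Pm]]|hno].
  by apply: (IH m) => //; lia.
exists n; split => // u Pu; case: (leqP n u) => // hu.
by exfalso; apply: hno; exists u.
Qed.

Section Aux5.
Variable k : fieldType.
Variables d b e l : nat.

Definition Aid : idl k := ideal_mul (ideal_gen (gJ k d)) (ideal_exp (ideal_gen (gI k d b e)) l).

Lemma A_supp f : Aid f -> supp_in (SA d b e l.+1) f.
Proof.
apply: mul_supp; [exact: J_supp | exact: Iexp_supp |].
move=> i1 j1 i2 j2 [h|h] [p [q [r [h1 [h2 h3]]]]].
  exists p.+1, q, r; split; first lia. split; first lia.
  by rewrite mulnS; split; lia.
exists p, q.+1, r; split; first lia. split; first lia.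
by rewrite mulnS; split; lia.
Qed.

Lemma A_mon c i j : SA d b e l.+1 i j -> Aid (c * mon k i j).
Proof.
move=> [p [q [r [hl [hpq [h1 h2]]]]]].
case: p hl hpq h1 h2 => [|p] hl hpq h1 h2.
  case: q hl hpq h1 h2 => [|q] // hl hpq h1 h2.
  have -> : c * mon k i j = (c * mon k (i - (d * 0 + b * r)) (j - (d * q.+1 + e * r))
      * mon k 0 d) * mon k (d * 0 + b * r) (d * q + e * r).
    rewrite -(mulrA c) -(mulrA c) !monD; congr (_ * mon k _ _); rewrite ?mulnS; lia.
  apply: mul1; first exact: (@gen_mem _ (gJ k d) 1).
  by apply: mono_Iexp; lia.
have -> : c * mon k i j = (c * mon k (i - (d * p.+1 + b * r)) (j - (d * q + e * r))
    * mon k d 0) * mon k (d * p + b * r) (d * q + e * r).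
  rewrite -(mulrA c) -(mulrA c) !monD; congr (_ * mon k _ _); rewrite ?mulnS; lia.
apply: mul1; first exact: (@gen_mem _ (gJ k d) 0).
by apply: mono_Iexp; lia.
Qed.

Lemma A_supp_mem f : supp_in (SA d b e l.+1) f -> Aid f.
Proof.
apply: supp_ideal; [exact: mul0 | exact: mulD |].
by move=> c i j h; exact: A_mon.
Qed.

Definition gT (s t : nat) : seq (bipoly k) := [:: mon k s 0; mon k 0 t].

Lemma T_supp s t f : ideal_gen (gT s t) f -> supp_in (fun i j => (s <= i)%N \/ (t <= j)%N) f.
Proof.
apply: gen_supp.
  move=> i j i' j' [h|h] hi hj; [left|right]; lia.
case=> [|[|n]] /=; try apply: supp_mon.
- by left.
- by right.
- by rewrite nth_nil; exact: supp0.
Qed.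

Lemma T_supp_mem s t f : supp_in (fun i j => (s <= i)%N \/ (t <= j)%N) f -> ideal_gen (gT s t) f.
Proof.
apply: supp_ideal; [exact: gen0 | exact: genD |].
move=> c i j [h|h].
  have -> : c%:P%:P * mon k i j = (c%:P%:P * mon k (i - s) j) * (gT s t)`_0.
    by rewrite /= -mulrA monD; congr (_ * mon k _ _); lia.
  exact: gen_mem.
have -> : c%:P%:P * mon k i j = (c%:P%:P * mon k i (j - t)) * (gT s t)`_1.
  by rewrite /= -mulrA monD; congr (_ * mon k _ _); lia.
exact: gen_mem.
Qed.

End Aux5.
Unset Implicit Arguments. Set Strict Implicit.
Theorem mainTheorem9 (k : fieldType) (d b : nat)
  (hd : (2 <= d)%N) (hb1 : (1 <= b)%N) (hb2 : (b <= d - 1)%N)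
  (hcop : coprime d b) (l : nat) (hl : (1 <= l)%N) :
  let I := ideal_gen [:: varx k ^+ d; vary k ^+ d;
                         varx k ^+ b * vary k ^+ (d - b)] in
  let J := ideal_gen [:: varx k ^+ d; vary k ^+ d] in
  exists s t : nat,
    ideal_eq (ideal_colon (ideal_mul J (ideal_exp I (l - 1))) (ideal_exp I l))
             (ideal_gen [:: varx k ^+ s; vary k ^+ t]).
Proof.
move=> I J.
set e := (d - b)%N.
have hde : d = (b + e)%N by rewrite /e; lia.
case: l hl => [//|l] _.
rewrite subn1 /=.
have eI : I = ideal_gen (gI k d b e).
  by rewrite /I /gI /mon !expr0 mulr1 mul1r.
have eJ : J = ideal_gen (gJ k d).
  by rewrite /J /gJ /mon !expr0 mulr1 mul1r.
have hP : PP d b l.+1 (d - b) by exists 1%N, 1%N; rewrite !muln1; split; lia.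
have hQ : QQ d b l.+1 b by exists 1%N, 0%N; rewrite !muln1 muln0; split; lia.
have [s [Ps ms]] := min_ex hP.
have [t [Qt mt]] := min_ex hQ.
have eT : ideal_gen [:: varx k ^+ s; vary k ^+ t] = ideal_gen (gT k s t).
  by rewrite /gT /mon !expr0 mulr1 mul1r.
exists s, t => f; rewrite eT eI eJ /ideal_colon; split.
- move=> hC; apply: T_supp_mem => i j nz.
  have hm : ideal_exp (ideal_gen (gI k d b e)) l.+1
      (mon k (d * 0 + b * l.+1)%N (d * 0 + e * l.+1)%N) by apply: mono_Iexp; lia.
  rewrite !muln0 !add0n in hm.
  have := A_supp (hC _ hm).
  rewrite -(cf_shift f (b * l.+1) (e * l.+1) i j) in nz.
  move/(_ _ _ nz) => /(SA_PQ hde) [/ms|/mt]; [left|right] => //.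
- move=> hT g hg; apply: A_supp_mem.
  have h1 := T_supp hT. have h2 := Iexp_supp (m:=l.+1) hg. have h3 := comb hde Ps Qt.
  exact: (suppM h1 h2 h3).
Qed.
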